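(* Consider the processes $x^{ji}$ ($i\in[n]$, $j\in\mathcal N_i$) and $y^i$ ($i\in[n]$) defined by the stochastic differential equations (SDE-x) and (SDE-y) in the context, for an arbitrary initially infected set $\Lambda\subset[n]$. Then for all $i\in[n]$, $j\in\mathcal N_i$ and $t\ge0$: (1) $\mathbb{1}_p^\top x^{ji}(t)=\mathbb{1}_q^\top y^i(t)$; (2) $x^{ji}(t)\in\{0_p,e_1,\dots,e_p\}$; (3) $y^i(t)\in\{0_q,f_1,\dots,f_q\}$.
   Context: Notation: $[n]=\{1,\dots,n\}$; $\mathbb{1}_p$ all-ones vector in $\mathbb{R}^p$, $0_p$ zero vector; $E_{mm'}$ ($m,m'\in[p]$) the $p\times p$ matrix with a single $1$ at $(m,m')$, $e_m$ the $m$-th canonical basis vector of $\mathbb{R}^p$; $F_{\ell\ell'}$ ($\ell,\ell'\in[q]$) the $q\times q$ matrix with a single $1$ at $(\ell,\ell')$, $f_\ell$ the $\ell$-th canonical basis vector of $\mathbb{R}^q$. For a probability vector $\phi$ on $[p]$, $x\sim\phi$ means $P(x=e_m)=\phi_m$ (similarly for $\psi$ on $[q]$ with $f_\ell$). Parameters: $T\in\mathbb{R}^{p\times p}$ and $R\in\mathbb{R}^{q\times q}$ are invertible Metzler matrices (nonnegative off-diagonal entries) with non-positive row sums; $\phi,\psi$ probability vectors on $[p]$, $[q]$; $b=-T\mathbb{1}_p$, $d=-R\mathbb{1}_q$. $\mathcal G=([n],\mathcal E)$ is an undirected graph with adjacency matrix $A=[a_{ij}]$ and neighbor sets $\mathcal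 N_i$, each node having at least one neighbor. Randomness: $N^{ji}_\lambda$, $N^i_\lambda$ are mutually independent Poisson counters of rate $\lambda\ge0$; $e^{ji}_\phi(t)\sim\phi$ and $f^i_\psi(t)\sim\psi$ are independent across $t$, indices, and of the counters. Solutions of jump SDEs: processes are right-continuous, constant on intervals in which no counter jumps, and when a counter jumps at $t$ the state changes to (state at $t^-$) plus the corresponding coefficient evaluated at the state at $t^-$ and the auxiliary processes at $t$. (SDE-x): $dx^{ji}=\sum_{m\neq m'}(E_{m'm}-E_{mm})x^{ji}\,dN^{ji}_{T_{mm'}}+\sum_{m=1}^p(e^{ji}_\phi e_m^\top-E_{mm})x^{ji}\,dN^{ji}_{b_m}-x^{ji}\sum_{\ell=1}^q y^i_\ell\,dN^i_{d_\ell}+e^{ji}_\phi(1-\mathbb{1}_q^\top y^i)\sum_{k=1}^n a_{ik}\sum_{m=1}^p x^{ik}_m\,dN^{ik}_{b_m}$. (SDE-y): $dy^i=\sum_{\ell\neq\ell'}(F_{\ell'\ell}-F_{\ell\ell})y^i\,dN^i_{R_{\ell\ell'}}-y^i\sum_{\ell=1}^q y^i_\ell\,dN^i_{d_\ell}+f^i_\psi(1-\mathbb{1}_q^\top y^i)\sum_{k=1}^n a_{ik}\sum_{m=1}^p x^{ik}_m\,dN^{ik}_{b_m}$. Initial conditions: for $i\in\Lambda$, $x^{ji}(0)\sim\phi$ and $y^i(0)\sim\psi$; for $i\notin\Lambda$, $x^{ji}(0)=0_p$, $y^i(0)=0_q$. *)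

(* Defs.v *)
From mathcomp Require Import all_boot all_order all_algebra.
From mathcomp Require Import reals.
Set Implicit Arguments. Unset Strict Implicit. Unset Printing Implicit Defensive.
Import Order.TTheory GRing.Theory Num.Theory.
Local Open Scope ring_scope.

(* CT j i m m'  ==  N^{ji}_{T_{mm'}}     (used for m <> m')
   CB j i m     ==  N^{ji}_{b_m}
   CD i l       ==  N^{i}_{d_l}
   CR i l l'    ==  N^{i}_{R_{l l'}}     (used for l <> l')               *)
Inductive counter (n p q : nat) : Type :=
| CT of 'I_n & 'I_n & 'I_p & 'I_p
| CB of 'I_n & 'I_n & 'I_p
| CD of 'I_n & 'I_q
| CR of 'I_n & 'I_q & 'I_q.
Arguments CT {n p q}. Arguments CB {n p q}.
Arguments CD {n p q}. Arguments CR {n p q}.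

Section Defs.
Variable R : realType.

Definition metzler k (M : 'M[R]_k) := forall a b : 'I_k, a != b -> 0 <= M a b.
Definition nonpos_rowsums k (M : 'M[R]_k) := forall a : 'I_k, \sum_(b < k) M a b <= 0.
Definition prob_vec k (v : 'I_k -> R) := (forall a, 0 <= v a) /\ \sum_(a < k) v a = 1.

(* b = - T 1_p , d = - R 1_q *)
Definition exit_rate k (M : 'M[R]_k) (a : 'I_k) : R := - \sum_(b < k) M a b.

Definition evec k (a : 'I_k) : 'cV[R]_k := delta_mx a 0.
Definition ones_dot k (x : 'cV[R]_k) : R := ((const_mx 1 : 'cV[R]_k)^T *m x) 0 0.

Definition rate n p q (T : 'M[R]_p) (Rq : 'M[R]_q) (c : counter n p q) : R :=
  match c with
  | CT _ _ m m' => T m m'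
  | CB _ _ m => exit_rate T m
  | CD _ l => exit_rate Rq l
  | CR _ l l' => Rq l l'
  end.

Definition left_value V (X : R -> V) (t : R) (v : V) :=
  exists2 eps : R, 0 < eps & forall s, t - eps < s < t -> X s = v.

(* right-continuous nondecreasing counting path starting at 0 with unit jumps;
   Nm t is its left limit N(t^-) *)
Definition counting_path (N Nm : R -> nat) :=
  [/\ N 0 = 0%N,
      (forall s t, 0 <= s -> s <= t -> (N s <= N t)%N),
      (forall t, 0 <= t -> exists2 eps : R, 0 < eps &
                   forall s, t <= s < t + eps -> N s = N t) &
      (forall t, 0 < t -> left_value N t (Nm t) /\ (N t <= (Nm t).+1)%N)].

(* Sample-path properties of a family of Poisson counters with the given rates:
   counting paths, rate-0 counters never jump, and (the probability-one event
   for independent Poisson counters) no two distinct counters jump together. *)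
Definition poisson_paths n p q (T : 'M[R]_p) (Rq : 'M[R]_q)
    (N Nm : counter n p q -> R -> nat) :=
  [/\ (forall c, counting_path (N c) (Nm c)),
      (forall c, rate T Rq c = 0 -> forall t, 0 <= t -> N c t = 0%N) &
      (forall c c' t, 0 < t -> N c t <> Nm c t -> N c' t <> Nm c' t -> c = c')].

Definition dN n p q (N Nm : counter n p q -> R -> nat) c t : R :=
  (N c t)%:R - (Nm c t)%:R.

Definition pc_process n p q (N Nm : counter n p q -> R -> nat) V
    (Z Zm : R -> V) :=
  [/\ (forall t, 0 <= t -> exists2 eps : R, 0 < eps &
                 forall s, t <= s < t + eps -> Z s = Z t),
      (forall a b, 0 <= a -> a <= b ->
         (forall c s, a < s <= b -> N c s = Nm c s) ->
         forall s, a <= s <= b -> Z s = Z a) &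
      (forall t, 0 < t -> left_value Z t (Zm t))].

Section Jumps.
Variables (n p q : nat) (adj : rel 'I_n) (N Nm : counter n p q -> R -> nat).
Variables (xm : 'I_n -> 'I_n -> R -> 'cV[R]_p) (ym : 'I_n -> R -> 'cV[R]_q).
Variables (e : 'I_n -> 'I_n -> R -> 'cV[R]_p) (f : 'I_n -> R -> 'cV[R]_q).

Local Notation dN := (dN N Nm).

Definition infection_term (i : 'I_n) (t : R) : R :=
  \sum_(k < n) (adj i k)%:R *
     \sum_(m < p) xm i k t m 0 * dN (CB i k m) t.

Definition jump_x (j i : 'I_n) (t : R) : 'cV[R]_p :=
    \sum_(m < p) \sum_(m' < p | m != m')
        dN (CT j i m m') t *: ((delta_mx m' m - delta_mx m m) *m xm j i t)
  + \sum_(m < p)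
        dN (CB j i m) t *: ((e j i t *m (evec m)^T - delta_mx m m) *m xm j i t)
  - (\sum_(l < q) ym i t l 0 * dN (CD i l) t) *: xm j i t
  + ((1 - ones_dot (ym i t)) * infection_term i t) *: e j i t.

Definition jump_y (i : 'I_n) (t : R) : 'cV[R]_q :=
    \sum_(l < q) \sum_(l' < q | l != l')
        dN (CR i l l') t *: ((delta_mx l' l - delta_mx l l) *m ym i t)
  - (\sum_(l < q) ym i t l 0 * dN (CD i l) t) *: ym i t
  + ((1 - ones_dot (ym i t)) * infection_term i t) *: f i t.
End Jumps.

(* (x, y) with left limits (xm, ym) solve (SDE-x),(SDE-y) along the given
   counter paths and auxiliary paths e = e^{ji}_phi, f = f^i_psi *)
Definition is_solution n p q (adj : rel 'I_n) (N Nm : counter n p q -> R -> nat)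
    (x xm : 'I_n -> 'I_n -> R -> 'cV[R]_p) (y ym : 'I_n -> R -> 'cV[R]_q)
    (e : 'I_n -> 'I_n -> R -> 'cV[R]_p) (f : 'I_n -> R -> 'cV[R]_q) :=
  [/\ (forall i j, adj i j -> pc_process N Nm (x j i) (xm j i)),
      (forall i, pc_process N Nm (y i) (ym i)),
      (forall i j t, adj i j -> 0 < t ->
          x j i t = xm j i t + jump_x adj N Nm xm ym e j i t) &
      (forall i t, 0 < t -> y i t = ym i t + jump_y adj N Nm xm ym f i t)].

End Defs.

(* Main.v *)
Require Import Defs.
From mathcomp Require Import all_boot all_order all_algebra.
From mathcomp Require Import reals.
From mathcomp Require Import boolp classical_sets.
From mathcomp Require Import lra.
Import Order.TTheory GRing.Theory Num.Theory.
Set Implicit Arguments. Unset Strict Implicit. Unset Printing Implicit Defensive.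
Local Open Scope ring_scope.

Section TimeInd.
Local Open Scope classical_set_scope.
Lemma time_induction (R : realType) (Inv : R -> Prop) :
  Inv 0 ->
  (forall t, 0 < t -> (forall r, 0 <= r -> r < t -> Inv r) -> Inv t) ->
  (forall t, 0 <= t -> Inv t -> exists2 eps, 0 < eps & forall s, t <= s -> s < t + eps -> Inv s) ->
  forall t, 0 <= t -> Inv t.
Proof.
move=> I0 Istep Iright t0 ht0; apply: contrapT => nI.
pose B := [set t : R | (0 <= t) && (t <= t0) /\ forall r, 0 <= r -> r <= t -> Inv r].
have B0 : B 0.
  split; first by rewrite lexx ht0.
  by move=> r r0 r0'; have -> : r = 0 by apply/eqP; rewrite eq_le r0 r0'.
have ubB : ubound B t0 by move=> u [/andP[_ ->]].
have hsB : has_sup B by split; [exists 0 | exists t0].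
set s := sup B.
have s0 : 0 <= s by apply: sup_upper_bound.
have st0 : s <= t0 by apply: ge_sup => //; exists 0.
have IH : forall r, 0 <= r -> r < s -> Inv r.
  move=> r r0 rs; have [b [_ Hb] rb] := @sup_adherent _ B (s - r) ltac:(by rewrite subr_gt0) hsB.
  by apply: Hb => //; apply/ltW; move: rb; rewrite opprB addrCA subrr addr0.
have Is : Inv s.
  have [->|sn0] := eqVneq s 0; first exact: I0.
  by apply: Istep => //; rewrite lt_def sn0 s0.
have [eps eps0 Heps] := Iright s s0 Is.
pose u := Order.min (s + eps / 2) t0.
have eps2 : 0 < eps / 2 by rewrite divr_gt0.
have ueps : u < s + eps.
  rewrite gt_min; apply/orP; left; rewrite ltrD2l ltr_pdivrMr // ltr_pMr //.
  by rewrite ltr1n.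
have Bu : B u.
  split.
    rewrite le_min ge_min lexx orbT andbT ht0 andbT.
    by rewrite addr_ge0 // ltW.
  move=> r r0 ru; have [rs|sr] := ltP r s; first exact: IH.
  by apply: Heps => //; apply: le_lt_trans ueps.
have us : u <= s by apply: sup_upper_bound.
move: us; rewrite ge_min => /orP[|t0s].
  by rewrite -subr_le0 addrAC subrr add0r leNgt eps2.
by apply: nI; have -> : t0 = s by apply/eqP; rewrite eq_le t0s st0.
Qed.
End TimeInd.

Section Basics.
Variable R : realType.

Definition isb k (v : 'cV[R]_k) := v = 0 \/ exists m, v = evec R m.

Lemma ones_dotE k (v : 'cV[R]_k) : ones_dot v = \sum_(a < k) v a 0.
Proof. by rewrite /ones_dot !mxE; apply: eq_bigr => a _; rewrite !mxE mul1r. Qed.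

Lemma ones_dotD k (u v : 'cV[R]_k) : ones_dot (u + v) = ones_dot u + ones_dot v.
Proof. by rewrite !ones_dotE -big_split; apply: eq_bigr => a _; rewrite mxE. Qed.

Lemma ones_dotN k (u : 'cV[R]_k) : ones_dot (- u) = - ones_dot u.
Proof. by rewrite !ones_dotE -sumrN; apply: eq_bigr => a _; rewrite mxE. Qed.

Lemma ones_dotZ k c (u : 'cV[R]_k) : ones_dot (c *: u) = c * ones_dot u.
Proof. by rewrite !ones_dotE mulr_sumr; apply: eq_bigr => a _; rewrite mxE. Qed.

Lemma ones_dot0 k : ones_dot (0 : 'cV[R]_k) = 0.
Proof. by rewrite ones_dotE big1 // => a _; rewrite mxE. Qed.

Lemma evecE k (m a : 'I_k) : evec R m a 0 = (a == m)%:R.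
Proof. by rewrite /evec mxE eqxx andbT. Qed.

Lemma ones_evec k (m : 'I_k) : ones_dot (evec R m) = 1.
Proof.
rewrite ones_dotE (bigD1 m) //= evecE eqxx big1 ?addr0 // => a /negbTE am.
by rewrite evecE am.
Qed.

Lemma isb_ones k (v : 'cV[R]_k) : isb v -> ones_dot v = 0 \/ ones_dot v = 1.
Proof. by case=> [->|[m ->]]; [left; exact: ones_dot0|right; exact: ones_evec]. Qed.

Lemma isb_ones0 k (v : 'cV[R]_k) : isb v -> ones_dot v = 0 -> v = 0.
Proof. by case=> // [[m ->]]; rewrite ones_evec => /eqP; rewrite oner_eq0. Qed.

Lemma isb_ones1 k (v : 'cV[R]_k) : isb v -> ones_dot v = 1 -> exists m, v = evec R m.
Proof. by case=> // ->; rewrite ones_dot0 => /eqP; rewrite eq_sym oner_eq0. Qed.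

Lemma isb_entry k (v : 'cV[R]_k) a : isb v -> v a 0 = 0 \/ v a 0 = 1.
Proof.
case=> [->|[m ->]]; first by left; rewrite mxE.
by rewrite evecE; case: (a == m); [right|left].
Qed.

Lemma delta_evec k (a b m : 'I_k) :
  (delta_mx a b - delta_mx b b) *m evec R m = (b == m)%:R *: (evec R a - evec R m).
Proof.
rewrite mulmxBl /evec !mul_delta_mx_cond.
by case: eqP => [->|_]; rewrite ?scale1r ?scale0r ?mulr1n ?mulr0n ?subrr.
Qed.

Lemma CB_evec k (u : 'cV[R]_k) (a m : 'I_k) :
  (u *m (evec R a)^T - delta_mx a a) *m evec R m = (a == m)%:R *: (u - evec R m).
Proof.
rewrite mulmxBl -mulmxA /evec trmx_delta !mul_delta_mx_cond.
case: eqP => [->|_]; rewrite ?scale1r ?scale0r ?mulr1n ?mulr0n ?subrr.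
  have -> : delta_mx 0 0 = (1%:M : 'M[R]_1).
    by apply/matrixP=> i j; rewrite !mxE !ord1.
  by rewrite mulmx1.
by rewrite mulmx0 subrr.
Qed.

Lemma sum1_hot (V : lmodType R) k (P : pred 'I_k) (F : 'I_k -> V) a :
  \sum_(i < k | P i) (i == a)%:R *: F i = (P a)%:R *: F a.
Proof.
rewrite big_mkcond (bigD1 a) //= eqxx scale1r.
rewrite big1 ?addr0 => [|i /negbTE ->]; last by rewrite scale0r if_same.
by case: (P a); rewrite ?scale1r ?scale0r.
Qed.

Lemma sum1_hotR k (F : 'I_k -> R) a :
  \sum_(i < k) F i * (i == a)%:R = F a.
Proof.
rewrite (bigD1 a) //= eqxx mulr1 big1 ?addr0 // => i /negbTE ->.
by rewrite mulr0.
Qed.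

Lemma sum2_hot (V : lmodType R) k (F : 'I_k -> 'I_k -> V) a b :
  \sum_(i < k) \sum_(j < k | i != j) ((i == a) && (j == b))%:R *: F i j
  = (a != b)%:R *: F a b.
Proof.
rewrite (bigD1 a) //= [X in _ + X]big1 ?addr0 => [|i /negbTE ia]; last first.
  by rewrite big1 // => j _; rewrite ia scale0r.
under eq_bigr do rewrite eqxx andTb.
exact: (sum1_hot (fun j => a != j)).
Qed.

End Basics.

Section Pres.
Variable R : realType.

Lemma mix_eq (V : nat) (b : bool) (u w : 'cV[R]_V) : u + b%:R *: (w - u) = if b then w else u.
Proof. by case: b; rewrite ?scale1r ?scale0r ?addr0 // addrC subrK. Qed.

Lemma natb_mul (b1 b2 : bool) : (b1%:R * b2%:R : R) = (b1 && b2)%:R.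
Proof. by case: b1; case: b2; rewrite ?mulr1 ?mulr0. Qed.

Lemma CT_pres k (c : bool) (a b : 'I_k) (v : 'cV[R]_k) : isb v ->
  isb (v + c%:R *: ((delta_mx a b - delta_mx b b) *m v)) /\
  ones_dot (v + c%:R *: ((delta_mx a b - delta_mx b b) *m v)) = ones_dot v.
Proof.
case=> [->|[m ->]]; first by rewrite mulmx0 scaler0 addr0; split=> //; left.
rewrite delta_evec scalerA natb_mul mix_eq.
by case: ifP => _; split; rewrite ?ones_evec //; right; eexists.
Qed.

Lemma CB_pres k (c : bool) (u : 'cV[R]_k) (a : 'I_k) (v : 'cV[R]_k) : isb v ->
  (exists m, u = evec R m) ->
  isb (v + c%:R *: ((u *m (evec R a)^T - delta_mx a a) *m v)) /\
  ones_dot (v + c%:R *: ((u *m (evec R a)^T - delta_mx a a) *m v)) = ones_dot v.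
Proof.
case=> [->|[m ->]] [l ->]; first by rewrite mulmx0 scaler0 addr0; split=> //; left.
rewrite CB_evec scalerA natb_mul mix_eq.
by case: ifP => _; split; rewrite ?ones_evec //; right; eexists.
Qed.

Lemma kill_pres k (g : R) (v : 'cV[R]_k) : isb v -> (g = 0 \/ g = 1) ->
  isb (v - g *: v) /\ ones_dot (v - g *: v) = ones_dot v - g * ones_dot v.
Proof.
move=> hv hg; rewrite ones_dotD ones_dotN ones_dotZ; split => //.
by case: hg => ->; rewrite ?scale0r ?subr0 ?scale1r ?subrr //; left.
Qed.

End Pres.

Section Step.
Variables (R : realType) (n p q : nat) (adj : rel 'I_n)
  (N Nm : counter n p q -> R -> nat)
  (xm : 'I_n -> 'I_n -> R -> 'cV[R]_p) (ym : 'I_n -> R -> 'cV[R]_q)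
  (e : 'I_n -> 'I_n -> R -> 'cV[R]_p) (f : 'I_n -> R -> 'cV[R]_q) (t : R).
Hypotheses (adj_sym : symmetric adj) (adj_irr : irreflexive adj).
Hypothesis He : forall i j, adj i j -> exists m, e j i t = evec R m.
Hypothesis Hf : forall i, exists l, f i t = evec R l.
Hypothesis Hy : forall i, isb (ym i t).
Hypothesis Hx : forall i j, adj i j ->
  isb (xm j i t) /\ ones_dot (xm j i t) = ones_dot (ym i t).
Local Notation D c := (dN N Nm c t).
Hypothesis HD : (forall c, D c = 0) \/
  exists c0, D c0 = 1 /\ forall c, c <> c0 -> D c = 0.

Let SCT j i := \sum_(m < p) \sum_(m' < p | m != m')
        D (CT j i m m') *: ((delta_mx m' m - delta_mx m m) *m xm j i t).
Let SCB j i := \sum_(m < p)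
        D (CB j i m) *: ((e j i t *m (evec R m)^T - delta_mx m m) *m xm j i t).
Let cD i := \sum_(l < q) ym i t l 0 * D (CD i l).
Let inf i := infection_term adj N Nm xm i t.
Let SCR i := \sum_(l < q) \sum_(l' < q | l != l')
        D (CR i l l') *: ((delta_mx l' l - delta_mx l l) *m ym i t).

Let X j i := xm j i t + (SCT j i + SCB j i - cD i *: xm j i t
             + ((1 - ones_dot (ym i t)) * inf i) *: e j i t).
Let Y i := ym i t + (SCR i - cD i *: ym i t
             + ((1 - ones_dot (ym i t)) * inf i) *: f i t).

Lemma SCT0 j i : (forall m m', D (CT j i m m') = 0) -> SCT j i = 0.
Proof. by move=> H; apply: big1 => m _; apply: big1 => m' _; rewrite H scale0r. Qed.
Lemma SCB0 j i : (forall m, D (CB j i m) = 0) -> SCB j i = 0.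
Proof. by move=> H; apply: big1 => m _; rewrite H scale0r. Qed.
Lemma cD0 i : (forall l, D (CD i l) = 0) -> cD i = 0.
Proof. by move=> H; apply: big1 => l _; rewrite H mulr0. Qed.
Lemma SCR0 i : (forall l l', D (CR i l l') = 0) -> SCR i = 0.
Proof. by move=> H; apply: big1 => l _; apply: big1 => l' _; rewrite H scale0r. Qed.
Lemma inf0 i : (forall k m, D (CB i k m) = 0) -> inf i = 0.
Proof.
move=> H; apply: big1 => k _; rewrite big1 ?mulr0 // => m _.
by rewrite H mulr0.
Qed.

Theorem step : (forall i, isb (Y i)) /\
  (forall i j, adj i j -> isb (X j i) /\ ones_dot (X j i) = ones_dot (Y i)).
Proof.
case: HD => [Hz | [c0 [H1 Hz]]].
  have E1 : forall j i, SCT j i = 0 by move=> j i; apply: SCT0 => *; apply: Hz.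
  have E2 : forall j i, SCB j i = 0 by move=> j i; apply: SCB0 => *; apply: Hz.
  have E3 : forall i, cD i = 0 by move=> i; apply: cD0 => *; apply: Hz.
  have E4 : forall i, SCR i = 0 by move=> i; apply: SCR0 => *; apply: Hz.
  have E5 : forall i, inf i = 0 by move=> i; apply: inf0 => *; apply: Hz.
  rewrite /X /Y; split=> [i|i j hij];
    rewrite ?E1 ?E2 ?E3 ?E4 ?E5 !mulr0 !scale0r !addr0 !subr0 ?addr0; first exact: Hy.
  exact: Hx.
case: c0 H1 Hz => [a b m0 m0'|a b m0|a l0|a l0 l0'] H1 Hz.
-
  have DCT j i m m' : D (CT j i m m') =
      (((j == a) && (i == b)) && ((m == m0) && (m' == m0')))%:R.
    case E: (((j == a) && (i == b)) && ((m == m0) && (m' == m0'))).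
      by move: E => /andP[/andP[/eqP-> /eqP->] /andP[/eqP-> /eqP->]].
    by apply: Hz => -[ja ib mm mm']; move: E; rewrite ja ib mm mm' !eqxx.
  have E2 : forall j i, SCB j i = 0 by move=> j i; apply: SCB0 => *; apply: Hz.
  have E3 : forall i, cD i = 0 by move=> i; apply: cD0 => *; apply: Hz.
  have E4 : forall i, SCR i = 0 by move=> i; apply: SCR0 => *; apply: Hz.
  have E5 : forall i, inf i = 0 by move=> i; apply: inf0 => *; apply: Hz.
  have E1 j i : SCT j i = ((j == a) && (i == b) && (m0 != m0'))%:R *:
      ((delta_mx m0' m0 - delta_mx m0 m0) *m xm j i t).
    rewrite /SCT; under eq_bigr do under eq_bigr do rewrite DCT.
    case: ((j == a) && (i == b)) => /=; last first.
      by rewrite scale0r; apply: big1 => m _; apply: big1 => m' _; rewrite scale0r.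
    exact: (sum2_hot (fun m m' => (delta_mx m' m - delta_mx m m) *m xm j i t)).
  rewrite /X /Y; split=> [i|i j hij];
    rewrite ?E1 ?E2 ?E3 ?E4 ?E5 !mulr0 !scale0r !addr0 !subr0 ?addr0; first exact: Hy.
  have [hx ho] := Hx hij.
  have [h1 h2] := CT_pres ((j == a) && (i == b) && (m0 != m0')) m0' m0 hx.
  by split=> //; rewrite h2.
-
  have DCB j i m : D (CB j i m) = (((j == a) && (i == b)) && (m == m0))%:R.
    case E: (((j == a) && (i == b)) && (m == m0)).
      by move: E => /andP[/andP[/eqP-> /eqP->] /eqP->].
    by apply: Hz => -[ja ib mm]; move: E; rewrite ja ib mm !eqxx.
  have E1 : forall j i, SCT j i = 0 by move=> j i; apply: SCT0 => *; apply: Hz.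
  have E3 : forall i, cD i = 0 by move=> i; apply: cD0 => *; apply: Hz.
  have E4 : forall i, SCR i = 0 by move=> i; apply: SCR0 => *; apply: Hz.
  have E2 j i : SCB j i = ((j == a) && (i == b))%:R *:
      ((e j i t *m (evec R m0)^T - delta_mx m0 m0) *m xm j i t).
    rewrite /SCB; under eq_bigr do rewrite DCB.
    case: ((j == a) && (i == b)) => /=; last first.
      by rewrite scale0r; apply: big1 => m _; rewrite scale0r.
    exact: (sum1_hot xpredT (fun m => (e j i t *m (evec R m)^T - delta_mx m m) *m xm j i t)).
  have E5 i : inf i = (i == a)%:R * ((adj a b)%:R * xm a b t m0 0).
    rewrite /inf /infection_term.
    have [->|ia] := eqVneq i a; last first.
      rewrite mul0r; apply: big1 => k _; rewrite big1 ?mulr0 // => m _.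
      by rewrite DCB (negbTE ia) mulr0.
    rewrite mul1r (bigD1 b) //= [X in _ + X]big1 ?addr0 => [|k /negbTE kb]; last first.
      by rewrite big1 ?mulr0 // => m _; rewrite DCB kb andbF mulr0.
    congr (_ * _); under eq_bigr do rewrite DCB !eqxx andTb.
    exact: sum1_hotR.
  have Eg : (adj a b)%:R * xm a b t m0 0 = 0 \/ (adj a b)%:R * xm a b t m0 0 = 1.
    case hab: (adj a b); last by left; rewrite mul0r.
    rewrite mul1r; apply: isb_entry; apply: (proj1 (@Hx b a _)).
    by rewrite adj_sym.
  rewrite /X /Y; split=> [i|i j hij]; rewrite ?E1 ?E2 ?E3 ?E4 ?E5 !scale0r !subr0 ?add0r.
    have [->|ia] := eqVneq i a; last first.
      by rewrite mul0r mulr0 scale0r addr0; exact: Hy.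
    rewrite ?eqxx mul1r; have [h0|h1] := isb_ones (Hy a).
      rewrite h0 subr0 mul1r (isb_ones0 (Hy a) h0) add0r.
      have [l ->] := Hf a; case: Eg => ->; rewrite ?scale0r ?scale1r; first by left.
      by right; eexists.
    by rewrite h1 subrr mul0r scale0r addr0; exact: Hy.
  have [hx ho] := Hx hij.
  have [Eia|ia] := eqVneq i a.
    subst i.
    have ja : (j == a) = false.
      apply/negbTE/eqP => ja; move: hij; rewrite ja => haa.
      by move: (adj_irr a); rewrite haa.
    rewrite ja /= scale0r add0r ?eqxx mul1r.
    have [h0|h1] := isb_ones (Hy a).
      have xa0 : xm j a t = 0 by apply: (isb_ones0 hx); rewrite ho.
      rewrite h0 subr0 mul1r (isb_ones0 (Hy a) h0) xa0 !add0r.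
      have [l ->] := Hf a; have [m ->] := He hij.
      by case: Eg => ->; rewrite ?scale0r ?scale1r ?ones_evec ?ones_dot0; split=> //;
        [left|right; eexists].
    by rewrite h1 subrr mul0r !scale0r !addr0; split=> //; rewrite ho h1.
  rewrite !mul0r !mulr0 !scale0r !addr0.
  have [h1 h2] := CB_pres ((j == a) && (i == b)) m0 hx (He hij).
  by split=> //; rewrite h2.
-
  have DCD i l : D (CD i l) = ((i == a) && (l == l0))%:R.
    case E: ((i == a) && (l == l0)).
      by move: E => /andP[/eqP-> /eqP->].
    by apply: Hz => -[ia ll]; move: E; rewrite ia ll !eqxx.
  have E1 : forall j i, SCT j i = 0 by move=> j i; apply: SCT0 => *; apply: Hz.
  have E2 : forall j i, SCB j i = 0 by move=> j i; apply: SCB0 => *; apply: Hz.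
  have E4 : forall i, SCR i = 0 by move=> i; apply: SCR0 => *; apply: Hz.
  have E5 : forall i, inf i = 0 by move=> i; apply: inf0 => *; apply: Hz.
  have E3 i : cD i = (i == a)%:R * ym i t l0 0.
    rewrite /cD; under eq_bigr do rewrite DCD -natb_mul mulrCA.
    by rewrite -mulr_sumr sum1_hotR.
  have Eg i : (i == a)%:R * ym i t l0 0 = 0 \/ (i == a)%:R * ym i t l0 0 = 1.
    case: (i == a); last by left; rewrite mul0r.
    by rewrite mul1r; apply: isb_entry.
  rewrite /X /Y; split=> [i|i j hij];
    rewrite ?E1 ?E2 ?E3 ?E4 ?E5 !mulr0 !scale0r !addr0 !add0r.
    by have [] := kill_pres (Hy i) (Eg i).
  have [hx ho] := Hx hij.
  have [h1 h2] := kill_pres hx (Eg i).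
  have [_ h4] := kill_pres (Hy i) (Eg i).
  by split=> //; rewrite h2 h4 ho.
-
  have DCR i l l' : D (CR i l l') =
      ((i == a) && ((l == l0) && (l' == l0')))%:R.
    case E: ((i == a) && ((l == l0) && (l' == l0'))).
      by move: E => /andP[/eqP-> /andP[/eqP-> /eqP->]].
    by apply: Hz => -[ia ll ll']; move: E; rewrite ia ll ll' !eqxx.
  have E1 : forall j i, SCT j i = 0 by move=> j i; apply: SCT0 => *; apply: Hz.
  have E2 : forall j i, SCB j i = 0 by move=> j i; apply: SCB0 => *; apply: Hz.
  have E3 : forall i, cD i = 0 by move=> i; apply: cD0 => *; apply: Hz.
  have E5 : forall i, inf i = 0 by move=> i; apply: inf0 => *; apply: Hz.
  have E4 i : SCR i = ((i == a) && (l0 != l0'))%:R *: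
      ((delta_mx l0' l0 - delta_mx l0 l0) *m ym i t).
    rewrite /SCR; under eq_bigr do under eq_bigr do rewrite DCR.
    case: (i == a) => /=; last first.
      by rewrite scale0r; apply: big1 => m _; apply: big1 => m' _; rewrite scale0r.
    exact: (sum2_hot (fun m m' => (delta_mx m' m - delta_mx m m) *m ym i t)).
  rewrite /X /Y; split=> [i|i j hij];
    rewrite ?E1 ?E2 ?E3 ?E4 ?E5 !mulr0 !scale0r !addr0 !subr0 ?addr0.
    by have [] := CT_pres ((i == a) && (l0 != l0')) l0' l0 (Hy i).
  have [hx ho] := Hx hij.
  have [_ h2] := CT_pres ((i == a) && (l0 != l0')) l0' l0 (Hy i).
  by split=> //; rewrite h2.
Qed.

End Step.

Lemma pick_pt (R : realType) (t e : R) : 0 < t -> 0 < e ->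
  exists r, [/\ 0 <= r, r < t & t - e < r].
Proof.
move=> ht he; exists (t - Order.min e t / 2).
have h1 : Order.min e t <= e by rewrite ge_min lexx.
have h2 : Order.min e t <= t by rewrite ge_min lexx orbT.
have h3 : 0 < Order.min e t by rewrite lt_min he ht.
move: (Order.min e t) h1 h2 h3 => m h1 h2 h3; split; lra.
Qed.

Lemma fin_min (R : realType) (I : finType) (P : I -> R -> Prop) :
  (forall i e e', 0 < e' -> e' <= e -> P i e -> P i e') ->
  (forall i, exists2 e, 0 < e & P i e) -> exists2 e, 0 < e & forall i, P i e.
Proof.
move=> mono Hex.
suff [e he H] : exists2 e, 0 < e & forall i, i \in enum I -> P i e.
  by exists e => // i; apply: H; rewrite mem_enum.
elim: (enum I) => [|a s [e he H]]; first by exists 1.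
have [ea hea Ha] := Hex a.
exists (Order.min e ea); first by rewrite lt_min he hea.
move=> i; rewrite inE => /orP[/eqP->|hi].
  by apply: (mono a ea) => //; [rewrite lt_min he hea | rewrite ge_min lexx orbT].
by apply: (mono i e) (H i hi) => //; [rewrite lt_min he hea | rewrite ge_min lexx].
Qed.

Definition Inv (R : realType) n p q (adj : rel 'I_n)
  (x : 'I_n -> 'I_n -> R -> 'cV[R]_p) (y : 'I_n -> R -> 'cV[R]_q) (t : R) :=
  (forall i, isb (y i t)) /\
  (forall i j, adj i j -> isb (x j i t) /\ ones_dot (x j i t) = ones_dot (y i t)).

Unset Implicit Arguments.
Theorem lemma3 (R : realType) (n p q : nat)
  (T : 'M[R]_p) (Rq : 'M[R]_q) (phi : 'I_p -> R) (psi : 'I_q -> R)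
  (adj : rel 'I_n) (Lambda : {set 'I_n})
  (N Nm : counter n p q -> R -> nat)
  (e : 'I_n -> 'I_n -> R -> 'cV[R]_p) (f : 'I_n -> R -> 'cV[R]_q)
  (x xm : 'I_n -> 'I_n -> R -> 'cV[R]_p) (y ym : 'I_n -> R -> 'cV[R]_q) :
  (* parameters *)
  metzler T -> nonpos_rowsums T -> T \in unitmx ->
  metzler Rq -> nonpos_rowsums Rq -> Rq \in unitmx ->
  prob_vec phi -> prob_vec psi ->
  (* undirected graph, every node has a neighbour *)
  symmetric adj -> irreflexive adj -> (forall i, exists j, adj i j) ->
  (* sample paths of the Poisson counters and auxiliary processes *)
  poisson_paths T Rq N Nm ->
  (forall i j t, adj i j -> 0 <= t -> exists2 m, 0 < phi m & e j i t = evec R m) ->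
  (forall i t, 0 <= t -> exists2 l, 0 < psi l & f i t = evec R l) ->
  (* initial conditions *)
  (forall i, i \in Lambda ->
     (forall j, adj i j -> exists2 m, 0 < phi m & x j i 0 = evec R m) /\
     exists2 l, 0 < psi l & y i 0 = evec R l) ->
  (forall i, i \notin Lambda ->
     (forall j, adj i j -> x j i 0 = 0) /\ y i 0 = 0) ->
  (* (x, y) solves (SDE-x), (SDE-y) *)
  is_solution adj N Nm x xm y ym e f ->
  forall i j t, adj i j -> 0 <= t ->
    [/\ ones_dot (x j i t) = ones_dot (y i t),
        x j i t = 0 \/ (exists m, x j i t = evec R m) &
        y i t = 0 \/ (exists l, y i t = evec R l)].
Proof.
move=> _ _ _ _ _ _ _ _ Hsym Hirr _ [Hcp _ Huniq] He Hf Hin Hout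
  [Hxpc Hypc Hxeq Hyeq] i0 j0 t0 hij0 ht0.
suff [HIy HIx] : Inv adj x y t0.
  by have [h1 h2] := HIx i0 j0 hij0; split => //; apply: HIy.
apply: (@time_induction R (Inv adj x y)) => //.
-
  split=> [i|i j hij].
    case: (boolP (i \in Lambda)) => hi.
      by have [_ [l _ ->]] := Hin i hi; right; exists l.
    by have [_ ->] := Hout i hi; left.
  case: (boolP (i \in Lambda)) => hi.
    have [Hx [l _ ->]] := Hin i hi; have [m _ ->] := Hx j hij.
    by rewrite !ones_evec; split; [right; exists m|].
  have [Hx ->] := Hout i hi; rewrite Hx //.
  by rewrite !ones_dot0; split; [left|].
-
  move=> s hs IH.
  have key c : N c s = Nm c s \/ N c s = (Nm c s).+1.
    case: (Hcp c) => _ Hmono _ Hleft.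
    have [[eps he Hl] hle] := Hleft s hs.
    have [r [r0 rs er]] := pick_pt hs he.
    have : (Nm c s <= N c s)%N.
      by rewrite -(Hl r); [apply: Hmono => //; apply: ltW | rewrite er rs].
    rewrite leq_eqVlt => /orP[/eqP->|h]; first by left.
    by right; apply/eqP; rewrite eqn_leq hle h.
  have HD : (forall c, dN N Nm c s = 0) \/
      exists c0, dN N Nm c0 s = 1 /\ forall c, c <> c0 -> dN N Nm c s = 0.
    have [[c0 h0]|hn] := pselect (exists c, N c s <> Nm c s).
      right; exists c0; split.
        rewrite /dN; case: (key c0) => // ->.
        by rewrite -addn1 natrD addrAC subrr add0r.
      move=> c hc; rewrite /dN; have [->|hc'] := eqVneq (N c s) (Nm c s).
        by rewrite subrr.
      by exfalso; apply: hc; apply: (Huniq c c0 s hs) => //; apply/eqP.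
    left => c; rewrite /dN; have [->|hc'] := eqVneq (N c s) (Nm c s).
      by rewrite subrr.
    by exfalso; apply: hn; exists c; apply/eqP.
  have Hyl i : isb (ym i s) /\ exists2 r, 0 <= r < s & ym i s = y i r.
    case: (Hypc i) => _ _ Hl; have [eps he Hle] := Hl s hs.
    have [r [r0 rs er]] := pick_pt hs he.
    have E : ym i s = y i r by rewrite Hle // er rs.
    split; last by exists r => //; rewrite r0 rs.
    by rewrite E; have [] := IH r r0 rs.
  have Hxl i j : adj i j ->
      isb (xm j i s) /\ ones_dot (xm j i s) = ones_dot (ym i s).
    move=> hij; case: (Hypc i) => _ _ Hly; have [e1 he1 Hl1] := Hly s hs.
    case: (Hxpc i j hij) => _ _ Hlx; have [e2 he2 Hl2] := Hlx s hs.
    have hm : 0 < Order.min e1 e2 by rewrite lt_min he1 he2.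
    have [r [r0 rs er]] := pick_pt hs hm.
    have er1 : s - e1 < r.
      by apply: le_lt_trans er; rewrite lerD2l lerN2 ge_min lexx.
    have er2 : s - e2 < r.
      by apply: le_lt_trans er; rewrite lerD2l lerN2 ge_min lexx orbT.
    rewrite -(Hl1 r) ?er1 ?rs // -(Hl2 r) ?er2 ?rs //.
    by have [_ H] := IH r r0 rs; apply: H.
  have He' i j : adj i j -> exists m, e j i s = evec R m.
    by move=> hij; have [m _ ->] := He i j s hij (ltW hs); exists m.
  have Hf' i : exists l, f i s = evec R l.
    by have [l _ ->] := Hf i s (ltW hs); exists l.
  have [Sy Sx] := step Hsym Hirr He' Hf' (fun i => (Hyl i).1) Hxl HD.
  split => [i|i j hij].
    by rewrite Hyeq //; apply: Sy.
  by rewrite Hxeq // Hyeq //; apply: Sx.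
-
  move=> s hs [IHy IHx].
  pose P := (fun (ij : 'I_n * 'I_n) (eps : R) => forall u, s <= u -> u < s + eps ->
       (adj ij.1 ij.2 -> x ij.2 ij.1 u = x ij.2 ij.1 s) /\ y ij.1 u = y ij.1 s).
  have mono : forall ij e1 e2, 0 < e2 -> e2 <= e1 -> P ij e1 -> P ij e2.
    move=> ij e1 e2 h0 h12 H u su ue; apply: H su _.
    by apply: lt_le_trans ue _; rewrite lerD2l.
  have Hex : forall ij, exists2 eps, 0 < eps & P ij eps.
    move=> [i j]; rewrite /P /=.
    case: (Hypc i) => Hr _ _; have [e1 he1 H1] := Hr s hs.
    have [e2 he2 H2] : exists2 e2 : R, 0 < e2 &
        forall u, s <= u < s + e2 -> adj i j -> x j i u = x j i s.
      case hij: (adj i j); last by exists 1.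
      case: (Hxpc i j hij) => Hrx _ _; have [e2 he2 H2] := Hrx s hs.
      by exists e2 => // u hu _; apply: H2.
    exists (Order.min e1 e2); first by rewrite lt_min he1 he2.
    move=> u su ue.
    have ue1 : u < s + e1 by apply: lt_le_trans ue _; rewrite lerD2l ge_min lexx.
    have ue2 : u < s + e2 by apply: lt_le_trans ue _; rewrite lerD2l ge_min lexx orbT.
    by split; [apply: H2 | apply: H1]; rewrite su.
  have [eps he H] := fin_min mono Hex.
  exists eps => // u su ue; split => [i|i j hij].
    by have [_ ->] := H (i, i) u su ue.
  have [h1 h2] := H (i, j) u su ue; rewrite h1 // h2.
  exact: IHx.
Qed.
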